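(* Let $(x,y,z,t)\in\mathbb{C}^4$ and $\lambda,\mu\in\mathbb{C}\setminus\{0\}$. Let $((x_n,y_n,z_n,t_n))_n$ be the optimal F sequence starting from $(x,y,z,t)$ and $((x'_n,y'_n,z'_n,t'_n))_n$ the optimal F sequence starting from $(\lambda x,\lambda y,\mu z,\mu t)$. Assume $z_\infty=\lim z_n$ and $z'_\infty=\lim z'_n$ exist and are nonzero, and that $L=\lim_n (x_n/z_\infty)^{2^n}$ and $L'=\lim_n (x'_n/z'_\infty)^{2^n}$ exist with $L\neq0$. Then $$\mu=\frac{z'_\infty}{z_\infty},\qquad \lambda=\frac{L'\,z'_\infty}{L\,z_\infty}.$$
   Context: Optimal F sequence: given $(x_0,y_0,z_0,t_0)\in\mathbb{C}^4$, define recursively $$(x_{n+1},y_{n+1},z_{n+1},t_{n+1})=\Big(\tfrac{\sqrt{x_n}\sqrt{z_n}+\sqrt{y_n}\sqrt{t_n}}{2},\ \tfrac{\sqrt{x_n}\sqrt{t_n}+\sqrt{y_n}\sqrt{z_n}}{2},\ \tfrac{z_n+t_n}{2},\ \sqrt{z_n}\sqrt{t_n}\Big),$$ where at each rank the square roots are chosen ''good'': $\Re\sqrt{x_n}\ge0$, $\Re\sqrt{z_n}\ge0$; either $|\sqrt{x_n}-\sqrt{y_n}|<|\sqrt{x_n}+\sqrt{y_n}|$ or equality and $\Im(\sqrt{y_n}/\sqrt{x_n})>0$; either $|\sqrt{z_n}-\sqrt{t_n}|<|\sqrt{z_n}+\sqrt{t_n}|$ or equality and $\Im(\sqrt{t_n}/\sqrt{z_n})>0$.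 *)

(* Defs.v *)
From Stdlib Require Import Reals Lra.
Open Scope R_scope.

Definition Cx : Type := (R * R)%type.
Definition Re (z : Cx) : R := fst z.
Definition Im (z : Cx) : R := snd z.
Definition C0 : Cx := (0, 0).
Definition C1 : Cx := (1, 0).
Definition C2 : Cx := (2, 0).
Definition Cadd (a b : Cx) : Cx := (Re a + Re b, Im a + Im b).
Definition Copp (a : Cx) : Cx := (- Re a, - Im a).
Definition Csub (a b : Cx) : Cx := Cadd a (Copp b).
Definition Cmul (a b : Cx) : Cx :=
  (Re a * Re b - Im a * Im b, Re a * Im b + Im a * Re b).
(* inverse; Cinv C0 = C0 by Rocq's total division *)
Definition Cinv (a : Cx) : Cx :=
  (Re a / (Re a * Re a + Im a * Im a), - Im a / (Re a * Re a + Im a * Im a)).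
Definition Cdiv (a b : Cx) : Cx := Cmul a (Cinv b).
Definition Cnorm (a : Cx) : R := sqrt (Re a * Re a + Im a * Im a).
Fixpoint Cpow (a : Cx) (n : nat) : Cx :=
  match n with O => C1 | S k => Cmul a (Cpow a k) end.

Definition Cconv (u : nat -> Cx) (l : Cx) : Prop :=
  forall eps : R, eps > 0 -> exists N : nat, forall n : nat, (n >= N)%nat ->
    Cnorm (Csub (u n) l) < eps.

Definition good_sqrts (a b sa sb : Cx) : Prop :=
  Cmul sa sa = a /\ Cmul sb sb = b /\ 0 <= Re sa /\
  (Cnorm (Csub sa sb) < Cnorm (Cadd sa sb) \/
   (Cnorm (Csub sa sb) = Cnorm (Cadd sa sb) /\ Im (Cdiv sb sa) > 0)).

Definition optimalF (x0 y0 z0 t0 : Cx) (x y z t : nat -> Cx) : Prop :=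
  x O = x0 /\ y O = y0 /\ z O = z0 /\ t O = t0 /\
  forall n : nat, exists sx sy sz st : Cx,
    good_sqrts (x n) (y n) sx sy /\ good_sqrts (z n) (t n) sz st /\
    x (S n) = Cdiv (Cadd (Cmul sx sz) (Cmul sy st)) C2 /\
    y (S n) = Cdiv (Cadd (Cmul sx st) (Cmul sy sz)) C2 /\
    z (S n) = Cdiv (Cadd (z n) (t n)) C2 /\
    t (S n) = Cmul sz st.

(* Main.v *)
Require Import Defs.
From Stdlib Require Import Reals Lra Lia.
From Coquelicot Require Complex.
Open Scope R_scope.

Module H.
Import Complex.
Local Open Scope C_scope.

Lemma mulE a b : Defs.Cmul a b = Cmult a b. Proof. reflexivity. Qed.
Lemma addE a b : Defs.Cadd a b = Cplus a b. Proof. reflexivity. Qed.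
Lemma subE a b : Defs.Csub a b = Cminus a b. Proof. reflexivity. Qed.
Lemma invE a : Defs.Cinv a = Cinv a.
Proof. unfold Defs.Cinv, Cinv, Defs.Re, Defs.Im. simpl. f_equal; f_equal; ring. Qed.
Lemma divE a b : Defs.Cdiv a b = Cdiv a b.
Proof. unfold Defs.Cdiv, Cdiv. rewrite invE. reflexivity. Qed.
Lemma normE a : Defs.Cnorm a = Cmod a.
Proof. unfold Defs.Cnorm, Cmod, Defs.Re, Defs.Im. f_equal. simpl. ring. Qed.
Lemma C0E : Defs.C0 = RtoC 0. Proof. reflexivity. Qed.
Lemma C2E : Defs.C2 = RtoC 2. Proof. reflexivity. Qed.
Lemma powE a n : Defs.Cpow a n = Cpow a n.
Proof. induction n; simpl. reflexivity. rewrite IHn. reflexivity. Qed.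
Lemma ImE a : Defs.Im a = Im a. Proof. reflexivity. Qed.

Definition rel (sa sb : C) : Prop :=
  (Cmod (sa - sb) < Cmod (sa + sb))%R \/
  (Cmod (sa - sb) = Cmod (sa + sb) /\ (Im (sb / sa) > 0)%R).

Lemma good_rel a b sa sb : Defs.good_sqrts a b sa sb ->
  sa * sa = a /\ sb * sb = b /\ rel sa sb.
Proof.
  unfold Defs.good_sqrts, rel. rewrite !mulE, !normE, !subE, !addE, divE, ImE.
  tauto.
Qed.

Lemma Cinv0 : Cinv 0 = 0.
Proof. apply injective_projections; simpl; unfold Rdiv; ring. Qed.

Lemma rel_nz sa sb : rel sa sb -> sa <> 0.
Proof.
  intros H E. subst sa. unfold rel in H.
  replace (0 - sb) with (- (0 + sb)) in H by ring.
  rewrite Cmod_opp in H. unfold Cdiv in H. rewrite Cinv0 in H.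
  replace (sb * 0) with (RtoC 0) in H by ring. simpl in H. lra.
Qed.

Lemma rel_neg sa sb : rel sa sb -> ~ rel sa (- sb).
Proof.
  intros H H'. pose proof (rel_nz _ _ H) as nz. unfold rel in *.
  replace (sa - - sb) with (sa + sb) in H' by ring.
  replace (sa + - sb) with (sa - sb) in H' by ring.
  replace (- sb / sa) with (- (sb / sa)) in H' by (field; repeat split; auto).
  change (Im (- (sb / sa))) with (- Im (sb / sa))%R in H'. lra.
Qed.

Lemma rel_scale (m sa sb : C) : m <> 0 -> rel sa sb -> rel (m * sa) (m * sb).
Proof.
  intros hm H. pose proof (rel_nz _ _ H) as nz. unfold rel in *.
  replace (m * sa - m * sb) with (m * (sa - sb)) by ring.
  replace (m * sa + m * sb) with (m * (sa + sb)) by ring.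
  replace (m * sb / (m * sa)) with (sb / sa) by (field; repeat split; auto).
  rewrite !Cmod_mult. apply Cmod_gt_0 in hm.
  destruct H as [H|[H1 H2]].
  - left. apply Rmult_lt_compat_l; auto.
  - right. rewrite H1. auto.
Qed.

Lemma integral a b : a * b = 0 -> a = 0 \/ b = 0.
Proof.
  intros H. destruct (Ceq_dec a 0) as [E|E]; auto. right.
  replace b with (/ a * (a * b)) by (field; repeat split; auto). rewrite H. ring.
Qed.

Lemma sq_eq a b : a * a = b * b -> a = b \/ a = - b.
Proof.
  intros H. assert (E : (a - b) * (a + b) = 0).
  { replace ((a - b) * (a + b)) with (a * a - b * b) by ring. rewrite H. ring. }
  destruct (integral _ _ E) as [E1|E1].
  - left. replace a with (a - b + b) by ring. rewrite E1. ring.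
  - right. replace a with (a + b - b) by ring. rewrite E1. ring.
Qed.

Lemma scale a b k sa sb sa' sb' :
  sa * sa = a -> sb * sb = b -> rel sa sb ->
  sa' * sa' = k * a -> sb' * sb' = k * b -> rel sa' sb' ->
  exists m, m * m = k /\ sa' = m * sa /\ sb' = m * sb.
Proof.
  intros ha hb hr ha' hb' hr'.
  pose proof (rel_nz _ _ hr) as nz. pose proof (rel_nz _ _ hr') as nz'.
  exists (sa' / sa).
  assert (Ek : k = sa' * sa' / (sa * sa)).
  { rewrite ha', <- ha. field. auto. }
  assert (Hm : sa' / sa * (sa' / sa) = k) by (rewrite Ek; field; auto).
  assert (Ha : sa' = sa' / sa * sa) by (field; repeat split; auto).
  split; [exact Hm|split; [exact Ha|]].
  assert (mnz : sa' / sa <> 0).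
  { intro E. rewrite E in Ha. apply nz'. rewrite Ha. ring. }
  assert (Hb : sb' * sb' = (sa' / sa * sb) * (sa' / sa * sb)).
  { rewrite hb', <- hb, <- Hm. ring. }
  destruct (sq_eq _ _ Hb) as [E|E]; auto.
  exfalso. apply (rel_neg (sa' / sa * sa) (sa' / sa * sb)).
  - apply rel_scale; auto.
  - rewrite <- Ha, <- E. auto.
Qed.

Definition conv (u : nat -> C) (l : C) : Prop :=
  forall eps : R, (eps > 0)%R -> exists N : nat, forall n : nat, (n >= N)%nat ->
    (Cmod (u n - l) < eps)%R.

Lemma convE u l : Defs.Cconv u l -> conv u l.
Proof. unfold Defs.Cconv, conv. intros H eps he. destruct (H eps he) as [N HN].
  exists N. intros n hn. rewrite <- normE. apply HN; auto. Qed.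

Lemma conv_unique u l l' : conv u l -> conv u l' -> l = l'.
Proof.
  intros H H'. destruct (Ceq_dec l l') as [E|E]; auto. exfalso.
  assert (hp : (0 < Cmod (l - l'))%R).
  { apply Cmod_gt_0. intro E2. apply E. replace l with (l - l' + l') by ring.
    rewrite E2. ring. }
  destruct (H (Cmod (l - l') / 2)%R) as [N1 H1]; [lra|].
  destruct (H' (Cmod (l - l') / 2)%R) as [N2 H2]; [lra|].
  specialize (H1 (max N1 N2) ltac:(lia)). specialize (H2 (max N1 N2) ltac:(lia)).
  pose proof (Cmod_triangle (- (u (max N1 N2) - l)) (u (max N1 N2) - l')) as T.
  rewrite Cmod_opp in T.
  replace (- (u (max N1 N2) - l) + (u (max N1 N2) - l')) with (l - l') in T by ring.
  lra.
Qed.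

Lemma conv_scale u l k : conv u l -> conv (fun n => k * u n) (k * l).
Proof.
  intros H eps he. pose proof (Cmod_ge_0 k) as hk.
  destruct (H (eps / (Cmod k + 1))%R) as [N HN].
  { apply Rdiv_lt_0_compat; lra. }
  exists N. intros n hn. specialize (HN n hn).
  replace (k * u n - k * l) with (k * (u n - l)) by ring. rewrite Cmod_mult.
  pose proof (Cmod_ge_0 (u n - l)).
  apply Rle_lt_trans with ((Cmod k + 1) * Cmod (u n - l))%R. nra.
  replace eps with ((Cmod k + 1) * (eps / (Cmod k + 1)))%R by (field; lra).
  apply Rmult_lt_compat_l; lra.
Qed.

Lemma conv_ext u v l : (forall n, u n = v n) -> conv u l -> conv v l.
Proof. intros E H eps he. destruct (H eps he) as [N HN]. exists N.
  intros n hn. rewrite <- E. auto. Qed.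


Lemma addE2 (a b : Cx) : Defs.Cadd a b = Cplus a b. Proof. reflexivity. Qed.
Lemma mulE2 (a b : Cx) : Defs.Cmul a b = Cmult a b. Proof. reflexivity. Qed.
Lemma divE2 (a b : Cx) : Defs.Cdiv a b = Cdiv a b. Proof. apply divE. Qed.

Ltac toC := match goal with |- @eq Cx ?a ?b => change (@eq C a b) end.

Ltac norm := repeat (rewrite divE2); change Defs.Cadd with Cplus; change Defs.Cmul with Cmult; change Defs.C2 with (RtoC 2); try toC.

Lemma main (x0 y0 z0 t0 lam mu : C)
  (x y z t x' y' z' t' : nat -> C) (zinf zinf' L L' : C) :
  lam <> Defs.C0 -> mu <> Defs.C0 ->
  optimalF x0 y0 z0 t0 x y z t ->
  optimalF (Defs.Cmul lam x0) (Defs.Cmul lam y0) (Defs.Cmul mu z0) (Defs.Cmul mu t0) x' y' z' t' ->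
  Defs.Cconv z zinf -> zinf <> Defs.C0 ->
  Defs.Cconv z' zinf' -> zinf' <> Defs.C0 ->
  Defs.Cconv (fun n => Defs.Cpow (Defs.Cdiv (x n) zinf) (Nat.pow 2 n)) L ->
  Defs.Cconv (fun n => Defs.Cpow (Defs.Cdiv (x' n) zinf') (Nat.pow 2 n)) L' ->
  L <> Defs.C0 ->
  mu = Defs.Cdiv zinf' zinf /\ lam = Defs.Cdiv (Defs.Cmul L' zinf') (Defs.Cmul L zinf).
Proof.
  intros hl hm O1 O2 cz hz cz' hz' cL cL' hL.
  rewrite C0E in hl, hm, hz, hz', hL.
  destruct O1 as [ex0 [ey0 [ez0 [et0 S1]]]].
  destruct O2 as [ex0' [ey0' [ez0' [et0' S2]]]].
  assert (P : forall n, z' n = mu * z n /\ t' n = mu * t n /\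
    exists c, x' n = c * x n /\ y' n = c * y n /\
      Cpow c (Nat.pow 2 n) * mu = lam * Cpow mu (Nat.pow 2 n)).
  { induction n.
    - rewrite ez0', et0', ex0', ey0', ez0, et0, ex0, ey0, !mulE.
      split; [reflexivity|split; [reflexivity|]].
      exists lam. split; [reflexivity|split; [reflexivity|]]. simpl. ring.
    - destruct IHn as [Ez [Et [c [Ex [Ey Ec]]]]].
      destruct (S1 n) as [sx [sy [sz [st [gx [gz [ex [ey [ez et]]]]]]]]].
      destruct (S2 n) as [sx' [sy' [sz' [st' [gx' [gz' [ex' [ey' [ez' et']]]]]]]]].
      apply good_rel in gx, gz, gx', gz'.
      destruct gx as [hx1 [hx2 hx3]]. destruct gz as [hz1 [hz2 hz3]].
      destruct gx' as [hx1' [hx2' hx3']]. destruct gz' as [hz1' [hz2' hz3']].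
      rewrite Ex in hx1'. rewrite Ey in hx2'. rewrite Ez in hz1'. rewrite Et in hz2'.
      destruct (scale (x n) (y n) c sx sy sx' sy' hx1 hx2 hx3 hx1' hx2' hx3')
        as [d [Hd [E1 E2]]].
      destruct (scale (z n) (t n) mu sz st sz' st' hz1 hz2 hz3 hz1' hz2' hz3')
        as [m [Hm [E3 E4]]].
      rewrite E1, E2, E3, E4, Ez, Et in *.
      rewrite ex', ey', ez', et', ex, ey, ez, et.
      split; [norm; unfold Cdiv; ring|]. split; [norm; rewrite <- Hm; ring|].
      exists (d * m). split; [norm; unfold Cdiv; ring|]. split; [norm; unfold Cdiv; ring|].
      replace (Nat.pow 2 (S n)) with (Nat.pow 2 n + Nat.pow 2 n)%nat by (simpl; lia).
      rewrite !Cpow_add_r, <- Cpow_mult_l.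
      replace (d * m * (d * m)) with (c * mu) by (rewrite <- Hd, <- Hm; ring).
      rewrite Cpow_mult_l.
      replace (Cpow c (Nat.pow 2 n) * Cpow mu (Nat.pow 2 n) * mu)
        with ((Cpow c (Nat.pow 2 n) * mu) * Cpow mu (Nat.pow 2 n)) by ring.
      rewrite Ec. ring. }
  apply convE in cz, cz', cL, cL'.
  assert (Zl : zinf' = mu * zinf).
  { apply (conv_unique z'); auto.
    apply (conv_ext (fun n => mu * z n)). intro n; symmetry; apply P.
    apply conv_scale; auto. }
  assert (EL : L' = lam / mu * L).
  { apply (conv_unique _ _ _ cL').
    eapply conv_ext; [|apply (conv_scale _ _ (lam / mu) cL)].
    intro n. simpl. rewrite !powE, !divE.
    destruct (P n) as [_ [_ [c [Ex [_ Ec]]]]]. rewrite Ex, Zl.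
    replace (c * x n / (mu * zinf)) with (c / mu * (x n / zinf)) by (field; repeat split; auto).
    rewrite Cpow_mult_l.
    assert (Ec' : Cpow c (Nat.pow 2 n) = lam * Cpow mu (Nat.pow 2 n) / mu).
    { rewrite <- Ec. field. auto. }
    assert (Q : Cpow (c / mu) (Nat.pow 2 n) = lam / mu).
    { unfold Cdiv at 1. rewrite Cpow_mult_l, Cpow_inv by auto. rewrite Ec'.
      field. split; auto. apply Cpow_nz. auto. }
    rewrite Q. reflexivity. }
  rewrite Zl, EL. split; norm; field; repeat split; auto.
Qed.

End H.

Theorem mainTheorem8 (x0 y0 z0 t0 lam mu : Cx)
  (x y z t x' y' z' t' : nat -> Cx) (zinf zinf' L L' : Cx) :
  lam <> C0 -> mu <> C0 ->
  optimalF x0 y0 z0 t0 x y z t ->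
  optimalF (Cmul lam x0) (Cmul lam y0) (Cmul mu z0) (Cmul mu t0) x' y' z' t' ->
  Cconv z zinf -> zinf <> C0 ->
  Cconv z' zinf' -> zinf' <> C0 ->
  Cconv (fun n => Cpow (Cdiv (x n) zinf) (Nat.pow 2 n)) L ->
  Cconv (fun n => Cpow (Cdiv (x' n) zinf') (Nat.pow 2 n)) L' ->
  L <> C0 ->
  mu = Cdiv zinf' zinf /\ lam = Cdiv (Cmul L' zinf') (Cmul L zinf).
Proof. exact (@H.main x0 y0 z0 t0 lam mu x y z t x' y' z' t' zinf zinf' L L'). Qed.
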